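(* Let $A,B$ be finite nonempty subsets of a group $G$ and put $K=\langle BB^{-1}\rangle$. Then for every integer $j\ge1$, $$|B^j|\ge\min\Big(|K|,\frac{(j+1)|B|}{2}\Big),$$ and $$|AB|\ge \min\Big(|AK|,\ |A|+\frac{|B|}{2}\Big).$$
   Context: $XY=\{xy: x\in X, y\in Y\}$ denotes the Minkowski product, $B^j$ the $j$-fold product $B\cdots B$, $BB^{-1}=\{bc^{-1}:b,c\in B\}$, and $\langle T\rangle$ the subgroup generated by $T$ (its cardinality may be infinite). *)

(* Defs.v *)
From Stdlib Require Import Arith List.
Import ListNotations.
Set Implicit Arguments.

Record Group := {
  carrier :> Type;
  gmul : carrier -> carrier -> carrier;
  ginv : carrier -> carrier;
  gone : carrier;
  gmulA : forall x y z, gmul x (gmul y z) = gmul (gmul x y) z;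
  gmul1l : forall x, gmul gone x = x;
  gmulVl : forall x, gmul (ginv x) x = gone
}.

Section Defs.
Variable G : Group.

Definition setmul (X Y : G -> Prop) : G -> Prop :=
  fun z => exists x y, X x /\ Y y /\ z = gmul G x y.

(* B^j = B...B (j-fold); B^0 = {1}, so B^1 = {1}B = B *)
Fixpoint setpow (B : G -> Prop) (j : nat) : G -> Prop :=
  match j with
  | 0 => fun z => z = gone G
  | S n => setmul (setpow B n) B
  end.

Definition setdiv (B : G -> Prop) : G -> Prop :=
  fun z => exists b c, B b /\ B c /\ z = gmul G b (ginv G c).

Inductive gen (T : G -> Prop) : G -> Prop :=
  | gen_one : gen T (gone G)
  | gen_in : forall x, T x -> gen T x
  | gen_mul : forall x y, gen T x -> gen T y -> gen T (gmul G x y)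
  | gen_inv : forall x, gen T x -> gen T (ginv G x).

Definition card_is (P : G -> Prop) (n : nat) : Prop :=
  exists l : list G, NoDup l /\ length l = n /\ forall x, P x <-> In x l.

Definition finite_set (P : G -> Prop) : Prop := exists n, card_is P n.
Definition nonempty (P : G -> Prop) : Prop := exists x, P x.

(* |P| <= n  (false when P is infinite) *)
Definition card_le (P : G -> Prop) (n : nat) : Prop :=
  exists m, m <= n /\ card_is P m.

End Defs.

Arguments setmul {G} X Y _.
Arguments setpow {G} B j _.
Arguments setdiv {G} B _.
Arguments gen {G} T _.
Arguments card_is {G} P n.
Arguments finite_set {G} P.
Arguments nonempty {G} P.
Arguments card_le {G} P n.

(* Main.v *)
Require Import Defs.
From Stdlib Require Import Arith List Lia Classical ClassicalEpsilon FunctionalExtensionality PropExtensionality.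

Section Lib.
Variable G : Group.
Local Notation "x * y" := (gmul G x y).
Local Notation inv := (ginv G).
Local Notation one := (gone G).
Definition set := G -> Prop.

Lemma mulA x y z : x * (y * z) = (x * y) * z. Proof. apply gmulA. Qed.
Lemma mul1l x : one * x = x. Proof. apply gmul1l. Qed.
Lemma mulVl x : inv x * x = one. Proof. apply gmulVl. Qed.
Lemma mulVr x : x * inv x = one.
Proof.
  rewrite <- (mul1l (x * inv x)). rewrite <- (mulVl (inv x)) at 1.
  rewrite <- mulA, (mulA (inv x) x), mulVl, mul1l. apply mulVl.
Qed.
Lemma mul1r x : x * one = x.
Proof. rewrite <- (mulVl x), mulA, mulVr. apply mul1l. Qed.
Lemma mulK x y : inv x * (x * y) = y. Proof. rewrite mulA, mulVl; apply mul1l. Qed.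
Lemma mulKV x y : x * (inv x * y) = y. Proof. rewrite mulA, mulVr; apply mul1l. Qed.
Lemma mulVK x y : (y * inv x) * x = y. Proof. rewrite <- mulA, mulVl; apply mul1r. Qed.
Lemma mulKr x y : (y * x) * inv x = y. Proof. rewrite <- mulA, mulVr; apply mul1r. Qed.
Lemma inv_uniq x y : x * y = one -> y = inv x.
Proof. intro H. rewrite <- (mulK x y), H. apply mul1r. Qed.
Lemma inv_inv x : inv (inv x) = x.
Proof. symmetry. apply inv_uniq. apply mulVl. Qed.
Lemma inv_mul x y : inv (x * y) = inv y * inv x.
Proof. symmetry. apply inv_uniq. rewrite <- mulA, (mulA y), mulVr, mul1l. apply mulVr. Qed.
Lemma inv_one : inv one = one.
Proof. symmetry. apply inv_uniq. apply mul1l. Qed.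

Lemma set_ext (P Q : set) : (forall x, P x <-> Q x) -> P = Q.
Proof. intro H. apply functional_extensionality. intro x. apply propositional_extensionality. apply H. Qed.

Lemma fin_of_list (l : list G) : forall (P : set), (forall x, P x -> In x l) ->
  exists l', NoDup l' /\ (forall x, P x <-> In x l') /\ length l' <= length l.
Proof.
  induction l as [|a l IH]; intros P HP.
  - exists nil. split; [constructor|split; [|simpl; lia]]. intro x. split; simpl; [|tauto].
    intro Hx. destruct (HP x Hx).
  - destruct (IH (fun x => P x /\ x <> a)) as [l' [N [M L]]].
    { intros x [Px ne]. destruct (HP x Px); [congruence|auto]. }
    destruct (classic (P a)) as [Pa|nPa].
    + exists (a :: l'). split; [|split].
      * constructor; auto. intro H. apply M in H. tauto.
      * intro x. simpl. split.
        -- intro Px. destruct (classic (x = a)); [left; congruence|right; apply M; auto].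
        -- intros [<-|H]; auto. apply M in H; tauto.
      * simpl; lia.
    + exists l'. split; [auto|split].
      * intro x. rewrite <- M. split; [|tauto]. intro Px. split; auto. intro; subst; tauto.
      * simpl; lia.
Qed.

Lemma nodup_len_eq (l1 l2 : list G) : NoDup l1 -> NoDup l2 -> (forall x, In x l1 <-> In x l2) -> length l1 = length l2.
Proof.
  intros N1 N2 H. apply Nat.le_antisymm; apply NoDup_incl_length; auto; intros x; apply H.
Qed.

Lemma card_is_uniq (P : set) n m : card_is P n -> card_is P m -> n = m.
Proof.
  intros [l1 [N1 [L1 M1]]] [l2 [N2 [L2 M2]]]. subst.
  apply nodup_len_eq; auto. intro x. rewrite <- M1, M2. tauto.
Qed.

Definition card (P : set) : nat := epsilon (inhabits 0) (fun n => card_is P n).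

Lemma card_spec P : finite_set P -> card_is P (card P).
Proof. intro H. unfold card. apply epsilon_spec. exact H. Qed.

Lemma card_eq P n : card_is P n -> card P = n.
Proof. intro H. apply (card_is_uniq P); auto. apply card_spec. exists n; auto. Qed.

Lemma list_card (P : set) l : (forall x, P x -> In x l) -> finite_set P /\ card P <= length l.
Proof.
  intro H. destruct (fin_of_list l P H) as [l' [N [M L]]].
  assert (C : card_is P (length l')) by (exists l'; auto).
  split. exists (length l'); auto. rewrite (card_eq _ _ C). auto.
Qed.

Lemma fin_list (P : set) : finite_set P -> exists l, NoDup l /\ length l = card P /\ forall x, P x <-> In x l.
Proof. intro H. apply card_spec in H. exact H. Qed.

Lemma sub_card (P Q : set) : finite_set Q -> (forall x, P x -> Q x) -> finite_set P /\ card P <= card Q.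
Proof.
  intros HQ S. destruct (fin_list Q HQ) as [l [_ [L M]]]. rewrite <- L.
  apply list_card. intros x Px. apply M; auto.
Qed.

Lemma sub_fin (P Q : set) : finite_set Q -> (forall x, P x -> Q x) -> finite_set P.
Proof. intros; apply (sub_card P Q); auto. Qed.
Lemma sub_le (P Q : set) : finite_set Q -> (forall x, P x -> Q x) -> card P <= card Q.
Proof. intros; apply (sub_card P Q); auto. Qed.

Lemma card_ext (P Q : set) : (forall x, P x <-> Q x) -> card P = card Q.
Proof. intro H. rewrite (set_ext P Q H). auto. Qed.

Lemma card_disj_union (P Q : set) : finite_set P -> finite_set Q -> (forall x, P x -> Q x -> False) ->
  finite_set (fun x => P x \/ Q x) /\ card (fun x => P x \/ Q x) = card P + card Q.
Proof.
  intros HP HQ D. destruct (fin_list P HP) as [l1 [N1 [L1 M1]]].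
  destruct (fin_list Q HQ) as [l2 [N2 [L2 M2]]].
  assert (C : card_is (fun x => P x \/ Q x) (length (l1 ++ l2))).
  { exists (l1 ++ l2). split; [|split; auto].
    - apply NoDup_app; auto. intros a H1 H2. apply (D a); [apply M1|apply M2]; auto.
    - intro x. rewrite in_app_iff, <- M1, <- M2. tauto. }
  split. eexists; eauto. rewrite (card_eq _ _ C), length_app. lia.
Qed.

Lemma card_union (P Q : set) : finite_set P -> finite_set Q ->
  finite_set (fun x => P x \/ Q x) /\
  card (fun x => P x \/ Q x) + card (fun x => P x /\ Q x) = card P + card Q.
Proof.
  intros HP HQ.
  assert (F1 : finite_set (fun x => Q x /\ ~ P x)) by (apply (sub_card _ Q); tauto).
  assert (F2 : finite_set (fun x => P x /\ Q x)) by (apply (sub_card _ P); tauto).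
  destruct (card_disj_union P (fun x => Q x /\ ~ P x)) as [U1 C1]; auto. { tauto. }
  destruct (card_disj_union (fun x => P x /\ Q x) (fun x => Q x /\ ~ P x)) as [U2 C2]; auto. { tauto. }
  assert (E1 : (fun x => P x \/ Q x /\ ~ P x) = (fun x => P x \/ Q x)).
  { apply set_ext; intro x; destruct (classic (P x)); tauto. }
  assert (E2 : (fun x => (P x /\ Q x) \/ Q x /\ ~ P x) = Q).
  { apply set_ext; intro x; destruct (classic (P x)); tauto. }
  rewrite E1 in U1, C1. rewrite E2 in C2. split; auto. lia.
Qed.

Lemma card_disj_sub (P Q R : set) : finite_set R -> (forall x, P x -> R x) -> (forall x, Q x -> R x) ->
  (forall x, P x -> Q x -> False) -> card P + card Q <= card R.
Proof.
  intros HR SP SQ D.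
  destruct (sub_card P R) as [FP _]; auto. destruct (sub_card Q R) as [FQ _]; auto.
  destruct (card_disj_union P Q FP FQ D) as [_ C]. rewrite <- C.
  apply sub_card; auto. intros x [H|H]; auto.
Qed.

Lemma card_strict (P Q : set) x : finite_set Q -> (forall y, P y -> Q y) -> Q x -> ~ P x -> card P < card Q.
Proof.
  intros HQ S Qx nPx.
  assert (Fx : finite_set (fun y => y = x)) by (apply (list_card _ (x :: nil)); intros y ->; simpl; auto).
  assert (C1 : card (fun y => y = x) = 1).
  { apply card_eq. exists (x :: nil). split; [|split; [reflexivity|]].
    - constructor; [intros []|constructor].
    - intro y; simpl; split; [intros ->; left; auto| intros [->|[]]; auto]. }
  pose proof (card_disj_sub P (fun y => y = x) Q HQ S) as H.
  assert (card P + card (fun y => y = x) <= card Q). { apply H. intros y ->; auto. intros y Py ->; auto. }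
  lia.
Qed.

Lemma card_pos (P : set) x : finite_set P -> P x -> 1 <= card P.
Proof.
  intros HP Px. assert (card (fun _ => False) < card P).
  { apply (card_strict _ _ x); auto; tauto. }
  lia.
Qed.

Lemma card_ltrans (P : set) g : finite_set P -> finite_set (fun z => P (g * z)) /\ card (fun z => P (g * z)) = card P.
Proof.
  intro HP. destruct (fin_list P HP) as [l [N [L M]]].
  destruct (list_card (fun z => P (g * z)) (map (fun x => inv g * x) l)) as [F1 C1].
  { intros z Pz. apply in_map_iff. exists (g * z). split. apply mulK. apply M; auto. }
  rewrite length_map in C1. split; auto.
  destruct (fin_list _ F1) as [l' [N' [L' M']]].
  destruct (list_card P (map (fun x => g * x) l')) as [_ C2].
  { intros z Pz. apply in_map_iff. exists (inv g * z). split. apply mulKV. apply M'. rewrite mulKV; auto. }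
  rewrite length_map in C2. lia.
Qed.

Lemma card_rtrans (P : set) g : finite_set P -> finite_set (fun z => P (z * g)) /\ card (fun z => P (z * g)) = card P.
Proof.
  intro HP. destruct (fin_list P HP) as [l [N [L M]]].
  destruct (list_card (fun z => P (z * g)) (map (fun x => x * inv g) l)) as [F1 C1].
  { intros z Pz. apply in_map_iff. exists (z * g). split. apply mulKr. apply M; auto. }
  rewrite length_map in C1. split; auto.
  destruct (fin_list _ F1) as [l' [N' [L' M']]].
  destruct (list_card P (map (fun x => x * g) l')) as [_ C2].
  { intros z Pz. apply in_map_iff. exists (z * inv g). split. apply mulVK. apply M'. rewrite mulVK; auto. }
  rewrite length_map in C2. lia.
Qed.

Lemma card_inv (P : set) : finite_set P -> finite_set (fun z => P (inv z)) /\ card (fun z => P (inv z)) = card P.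
Proof.
  intro HP. destruct (fin_list P HP) as [l [N [L M]]].
  destruct (list_card (fun z => P (inv z)) (map inv l)) as [F1 C1].
  { intros z Pz. apply in_map_iff. exists (inv z). split. apply inv_inv. apply M; auto. }
  rewrite length_map in C1. split; auto.
  destruct (fin_list _ F1) as [l' [N' [L' M']]].
  destruct (list_card P (map inv l')) as [_ C2].
  { intros z Pz. apply in_map_iff. exists (inv z). split. apply inv_inv. apply M'. rewrite inv_inv; auto. }
  rewrite length_map in C2. lia.
Qed.

Lemma setmul_fin (X Y : set) : finite_set X -> finite_set Y -> finite_set (setmul X Y).
Proof.
  intros HX HY. destruct (fin_list X HX) as [l1 [_ [_ M1]]]. destruct (fin_list Y HY) as [l2 [_ [_ M2]]].
  apply (list_card _ (flat_map (fun x => map (fun y => x * y) l2) l1)).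
  intros z [x [y [Xx [Yy ->]]]]. apply in_flat_map. exists x. split. apply M1; auto.
  apply in_map_iff. exists y; split; auto. apply M2; auto.
Qed.

Lemma setmul_ltrans (X Y : set) g : setmul (fun z => X (g * z)) Y = (fun y => setmul X Y (g * y)).
Proof.
  apply set_ext. intro y. split.
  - intros [x [d [Xx [Yd ->]]]]. exists (g * x), d. repeat split; auto. apply mulA.
  - intros [x [d [Xx [Yd E]]]]. exists (inv g * x), d. repeat split.
    + rewrite mulKV; auto.
    + auto.
    + rewrite <- mulA, <- E, mulK. auto.
Qed.

Lemma nat_min (P : nat -> Prop) : (exists n, P n) -> exists n, P n /\ forall m, P m -> n <= m.
Proof.
  intros [n Pn]. revert Pn. induction n as [n IH] using (well_founded_induction lt_wf). intro Pn.
  destruct (classic (exists m, m < n /\ P m)) as [[m [Lm Pm]]|Hn].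
  - apply (IH m Lm Pm).
  - exists n. split; auto. intros m Pm. destruct (Nat.lt_ge_cases m n); auto. exfalso; eauto.
Qed.

End Lib.

Section Core.
Variable G : Group.
Local Notation "x * y" := (gmul G x y).
Local Notation inv := (ginv G).
Local Notation one := (gone G).
Local Notation set := (set G).
Local Notation card := (card G).

Variables K B : set.
Hypothesis K1 : K one.
Hypothesis Kmul : forall x y, K x -> K y -> K (x * y).
Hypothesis Kinv : forall x, K x -> K (inv x).
Hypothesis FB : finite_set B.
Hypothesis B1 : B one.
Hypothesis BK : forall b, B b -> K b.
Hypothesis Kmin : forall H : set, H one -> (forall x y, H x -> H y -> H (x * y)) ->
  (forall x, H x -> H (inv x)) -> (forall b, B b -> H b) -> forall k, K k -> H k.

Definition D (s : bool) : set := if s then B else (fun x => B (inv x)).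

Lemma D1 s : D s one.
Proof. destruct s; simpl; auto. rewrite inv_one; auto. Qed.
Lemma DK s d : D s d -> K d.
Proof. destruct s; simpl; auto. intro H. rewrite <- (inv_inv G d). auto. Qed.
Lemma Dmin s : forall H : set, H one -> (forall x y, H x -> H y -> H (x * y)) ->
  (forall x, H x -> H (inv x)) -> (forall b, D s b -> H b) -> forall k, K k -> H k.
Proof.
  intros H H1 Hm Hi HD. apply Kmin; auto. destruct s; simpl in HD; auto.
  intros b Bb. rewrite <- (inv_inv G b). apply Hi, HD. rewrite inv_inv; auto.
Qed.
Lemma Dfin s : finite_set (D s).
Proof. destruct s; simpl; auto. apply card_inv; auto. Qed.
Lemma Dcard s : card (D s) = card B.
Proof. destruct s; simpl; auto. apply card_inv; auto. Qed.
Lemma Dneg s d : D (negb s) d -> D s (inv d).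
Proof. destruct s; simpl; auto. rewrite inv_inv; auto. Qed.

Definition cls s (X : set) := finite_set X /\ nonempty X /\ (forall x, X x -> K x) /\
  exists k, K k /\ ~ setmul X (D s) k.

Lemma sub_mul s (X : set) x : X x -> setmul X (D s) x.
Proof. intro Xx. exists x, one. repeat split; auto. apply D1. rewrite mul1r; auto. Qed.

Lemma cls_fin s X : cls s X -> finite_set (setmul X (D s)).
Proof. intros [F _]. apply setmul_fin; auto. apply Dfin. Qed.

Lemma cls_le s X : cls s X -> card X <= card (setmul X (D s)).
Proof. intro c. apply sub_le. apply (cls_fin s X c). intros x; apply sub_mul. Qed.

Definition val s X := card (setmul X (D s)) - card X.

Lemma cls_trans s X g : cls s X -> K g ->
  cls s (fun z => X (g * z)) /\ card (fun z => X (g * z)) = card X /\ val s (fun z => X (g * z)) = val s X.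
Proof.
  intros c Kg. pose proof (cls_fin s X c) as FXD.
  destruct c as [FX [[x Xx] [XK [k [Kk nk]]]]].
  destruct (card_ltrans G X g FX) as [F1 C1].
  destruct (card_ltrans G (setmul X (D s)) g FXD) as [F2 C2].
  unfold val. rewrite setmul_ltrans. split; [|split; lia].
  split; auto. split. exists (inv g * x). rewrite mulKV; auto.
  split. intros z Xz. rewrite <- (mulK G g z). apply Kmul; auto.
  exists (inv g * k). split; auto. rewrite setmul_ltrans, mulKV. auto.
Qed.

Lemma setmul_union (X Y Z : set) : setmul (fun z => X z \/ Y z) Z = (fun y => setmul X Z y \/ setmul Y Z y).
Proof.
  apply set_ext. intro y. split.
  - intros [x [d [[Xx|Yx] [Zd ->]]]]; [left|right]; exists x, d; auto.
  - intros [[x [d [Xx [Zd ->]]]]|[x [d [Xx [Zd ->]]]]]; exists x, d; auto.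
Qed.

Theorem core : forall X, cls true X -> card B <= 2 * val true X.
Proof.
  intros X cX.
  destruct (nat_min (fun n => exists s X, cls s X /\ val s X = n)) as [kap [[s0 [X0 [c0 v0]]] kmin]].
  { exists (val true X), true, X; auto. }
  assert (KM : forall s Y, cls s Y -> kap <= val s Y) by (intros; apply kmin; eauto).
  destruct (nat_min (fun n => exists s Y, cls s Y /\ val s Y = kap /\ card Y = n))
    as [al [[s [A0 [cA0 [vA0 aA0]]]] amin]].
  { exists (card X0), s0, X0; auto. }
  assert (AM : forall s' Y, cls s' Y -> val s' Y = kap -> al <= card Y) by (intros; apply amin; eauto).
  clear kmin amin.
  assert (ATOM : forall A F, cls s A -> val s A = kap -> card A = al -> cls s F -> val s F = kap ->
     (exists x, A x /\ F x) -> forall x, A x -> F x).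
  { intros A F cA vA aA cF vF [x0 [Ax0 Fx0]] x Ax.
    destruct (classic (F x)) as [|nFx]; auto. exfalso.
    pose proof (cls_fin s A cA) as FAD. pose proof (cls_fin s F cF) as FFD.
    pose proof (cls_le s A cA) as LA. pose proof (cls_le s F cF) as LF.
    unfold val in vA, vF.
    destruct cA as [finA [neA [AK [kA [KkA nkA]]]]].
    destruct cF as [finF [neF [FK [kF [KkF nkF]]]]].
    set (I := fun z => A z /\ F z).
    assert (SID : forall y, setmul I (D s) y -> setmul A (D s) y /\ setmul F (D s) y).
    { intros y [z [d [[Az Fz] [Dd ->]]]]. split; exists z, d; auto. }
    assert (cI : cls s I).
    { split. apply (sub_fin G _ A); auto. intros z [? ?]; auto.
      split. exists x0; split; auto. split. intros z [Az _]; auto.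
      exists kA; split; auto. intro H; apply nkA, SID; auto. }
    assert (LtI : card I < card A).
    { apply (card_strict G _ _ x); auto. intros z [? ?]; auto. intros [_ ?]; auto. }
    pose proof (KM s I cI) as vI. unfold val in vI. pose proof (cls_le s I cI) as LI.
    destruct (card_union G A F finA finF) as [finU CU].
    change (fun x => A x /\ F x) with I in CU.
    destruct (card_union G _ _ FAD FFD) as [finUD CUD].
    assert (LID : card (setmul I (D s)) <= card (fun y => setmul A (D s) y /\ setmul F (D s) y)).
    { apply sub_le; [|auto]. apply (sub_fin G _ (setmul A (D s))); auto. tauto. }
    pose proof (cls_fin s I cI) as FID.
    assert (PI : 1 <= card I) by (apply (card_pos G _ x0); [apply cI| split; auto]).
    destruct (classic (exists k, K k /\ ~ setmul (fun z => A z \/ F z) (D s) k)) as [Hk|Hk].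
    - assert (cU : cls s (fun z => A z \/ F z)).
      { split; auto. split. exists x0; auto. split; auto. intros z [?|?]; auto. }
      pose proof (KM s _ cU) as vU. unfold val in vU. pose proof (cls_le s _ cU) as LU.
      rewrite setmul_union in vU, LU.
      assert (al <= card I).
      { apply (AM s); auto. unfold val. lia. }
      lia.
    - assert (KU : forall k, K k -> setmul A (D s) k \/ setmul F (D s) k).
      { intros k Kk. apply NNPP. intro H. apply Hk. exists k. split; auto. rewrite setmul_union. exact H. }
      assert (finK : finite_set K).
      { apply (sub_fin G _ _ finUD). intros k Kk; apply KU; auto. }
      set (Fs := fun y => K y /\ ~ setmul F (D s) y).
      assert (NF : forall f, F f -> ~ setmul Fs (D (negb s)) f).
      { intros f Ff [y [d [[Ky ny] [Dd E]]]]. apply ny. exists f, (inv d). repeat split; auto.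
        apply Dneg; auto. rewrite E, mulKr. auto. }
      assert (cFs : cls (negb s) Fs).
      { split. apply (sub_fin G _ K); auto. intros y [? ?]; auto.
        split. exists kF; split; auto. split. intros y [? ?]; auto.
        exists x0. split; auto. }
      assert (FDK : forall y, setmul F (D s) y -> K y).
      { intros y [z [d [Fz [Dd ->]]]]. apply Kmul; auto. apply (DK s); auto. }
      assert (C1 : card Fs + card (setmul F (D s)) = card K).
      { destruct (card_disj_union G Fs (setmul F (D s))) as [_ C].
        apply (sub_fin G _ K); auto. intros y [? ?]; auto. auto. intros y [_ ?]; auto.
        rewrite <- C. apply card_ext. intro y. split.
        - intros [[Ky _]|H]; auto.
        - intro Ky. destruct (classic (setmul F (D s) y)); [right|left]; auto. split; auto. }
      assert (C2 : card (setmul Fs (D (negb s))) + card F <= card K).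
      { apply card_disj_sub; auto.
        intros y [z [d [[Kz _] [Dd ->]]]]. apply Kmul; auto. apply (DK (negb s)); auto.
        intros y H Fy. apply (NF y); auto. }
      pose proof (KM _ _ cFs) as vFs. unfold val in vFs. pose proof (cls_le _ _ cFs) as LFs.
      assert (AF : al <= card Fs). { apply (AM (negb s)); auto. unfold val. lia. }
      assert (C3 : card Fs + card (setmul I (D s)) <= card (setmul A (D s))).
      { apply card_disj_sub; auto.
        intros y [Ky ny]. destruct (KU y Ky); tauto.
        intros y H; apply SID; auto.
        intros y [_ ny] H. apply ny, SID; auto. }
      lia. }
  pose proof cA0 as cA0'. destruct cA0' as [fA [[a0 Aa0] [AK miss]]].
  destruct (cls_trans s A0 a0 cA0 (AK a0 Aa0)) as [cH [cardH valH]].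
  set (H := fun z => A0 (a0 * z)) in *.
  assert (H1 : H one) by (unfold H; rewrite mul1r; auto).
  assert (HK : forall z, H z -> K z) by (destruct cH as [_ [_ [HK _]]]; auto).
  assert (HL : forall h z, H h -> H z -> H (inv h * z)).
  { intros h z Hh Hz.
    destruct (cls_trans s H (inv h) cH (Kinv h (HK h Hh))) as [cF [_ vF]].
    apply (ATOM H (fun z => H (inv h * z))); auto; try lia.
    exists h. split; auto. rewrite mulVl; auto. }
  assert (Hinv : forall h, H h -> H (inv h)).
  { intros h Hh. rewrite <- (mul1r G (inv h)). apply HL; auto. }
  assert (Hmul : forall x y, H x -> H y -> H (x * y)).
  { intros x y Hx Hy. rewrite <- (inv_inv G x). apply HL; auto. }
  pose proof (cls_fin s H cH) as FHD.
  destruct (classic (forall d, D s d -> H d)) as [AllD|NAll].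
  - exfalso. destruct cH as [_ [_ [_ [k [Kk nk]]]]]. apply nk, sub_mul.
    apply (Dmin s H); auto.
  - apply not_all_ex_not in NAll. destruct NAll as [d Hd].
    apply imply_to_and in Hd. destruct Hd as [Dd nHd].
    destruct cH as [fH cH'].
    destruct (card_rtrans G H (inv d) fH) as [_ CHd].
    assert (C1 : card H + card (fun z => H (z * inv d)) <= card (setmul H (D s))).
    { apply card_disj_sub; auto.
      intros z Hz. apply sub_mul; auto.
      intros z Hz. exists (z * inv d), d. repeat split; auto. rewrite mulVK; auto.
      intros z Hz Hzd. apply nHd.
      assert (E : inv (z * inv d) * z = d).
      { rewrite inv_mul, inv_inv, <- mulA, mulVl, mul1r. auto. }
      rewrite <- E. apply Hmul; auto. }
    assert (C2 : card (D s) <= card (setmul H (D s))).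
    { apply sub_le; auto. intros z Dz. exists one, z. repeat split; auto. rewrite mul1l; auto. }
    rewrite Dcard in C2.
    unfold val in valH, vA0. pose proof (KM true X cX) as vX.
    lia.
Qed.
End Core.

Section Top.
Variable G : Group.
Local Notation "x * y" := (gmul G x y).
Local Notation inv := (ginv G).
Local Notation one := (gone G).
Local Notation set := (set G).
Local Notation card := (card G).

Lemma ci_fin (P : set) n : card_is P n -> finite_set P /\ card P = n.
Proof. intro H. split. exists n; auto. apply card_eq; auto. Qed.

Lemma fin_ci (P : set) : finite_set P -> card_is P (card P).
Proof. apply card_spec. Qed.

Lemma claim2_one (A B : set) nA nB nAB : B one ->
  card_is A nA -> card_is B nB -> card_is (setmul A B) nAB ->
  card_le (setmul A (gen (setdiv B))) nAB \/ 2 * nA + nB <= 2 * nAB.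
Proof.
  intros B1 cA cB cAB.
  apply ci_fin in cA. destruct cA as [fA <-]. apply ci_fin in cB. destruct cB as [fB <-].
  apply ci_fin in cAB. destruct cAB as [fAB <-].
  set (K := gen (setdiv B)).
  assert (K1 : K one) by apply gen_one.
  assert (Kmul : forall x y, K x -> K y -> K (x * y)) by (intros; apply gen_mul; auto).
  assert (Kinv : forall x, K x -> K (inv x)) by (intros; apply gen_inv; auto).
  assert (BK : forall b, B b -> K b).
  { intros b Bb. apply gen_in. exists b, one. repeat split; auto. rewrite inv_one, mul1r; auto. }
  assert (Kmin : forall H : set, H one -> (forall x y, H x -> H y -> H (x * y)) ->
    (forall x, H x -> H (inv x)) -> (forall b, B b -> H b) -> forall k, K k -> H k).
  { intros H H1 Hm Hi HB k Kk. induction Kk as [| x [b [c [Bb [Bc ->]]]] | | ]; auto. }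
  destruct (classic (forall y, setmul A K y -> setmul A B y)) as [Hall|Hn].
  - left. destruct (sub_card G _ _ fAB Hall) as [f L]. exists (card (setmul A K)). split; auto.
    apply fin_ci; auto.
  - right. apply not_all_ex_not in Hn. destruct Hn as [y Hy]. apply imply_to_and in Hy.
    destruct Hy as [[a [k [Aa [Kk ->]]]] nAB].
    set (X := fun z => A (a * z) /\ K z).
    destruct (card_ltrans G A a fA) as [fAa _].
    assert (cX : cls G K B true X).
    { split. apply (sub_fin G _ _ fAa). intros z [? ?]; auto.
      split. exists one. split; [rewrite mul1r; auto|auto].
      split. intros z [? ?]; auto.
      exists k. split; auto. intros [x [b [[Ax Kx] [Bb E]]]]. apply nAB. exists (a * x), b.
      repeat split; auto. rewrite E. apply mulA. }
    pose proof (core G K B Kmul Kinv fB B1 BK Kmin X cX) as HC.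
    unfold val, D in HC.
    pose proof (cls_le G K B fB B1 true X cX) as LX. unfold D in LX.
    pose proof (cls_fin G K B fB true X cX) as FXB. unfold D in FXB.
    destruct cX as [fX _].
    set (A1 := fun z => X (inv a * z)).
    set (A2 := fun z => A z /\ ~ K (inv a * z)).
    destruct (card_ltrans G X (inv a) fX) as [fA1 cA1]. fold A1 in fA1, cA1.
    assert (fA2 : finite_set A2) by (apply (sub_fin G _ _ fA); intros z [? ?]; auto).
    assert (EA : card A = card A1 + card A2).
    { destruct (card_disj_union G A1 A2 fA1 fA2) as [_ C].
      { intros z [_ Kz] [_ nKz]; auto. }
      rewrite <- C. apply card_ext. intro z. unfold A1, A2, X. rewrite mulKV.
      destruct (classic (K (inv a * z))); tauto. }
    assert (EB : card (setmul A1 B) = card (setmul X B)).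
    { unfold A1. rewrite setmul_ltrans. apply card_ltrans; auto. }
    assert (fA2B : finite_set (setmul A2 B)) by (apply setmul_fin; auto).
    assert (L2 : card A2 <= card (setmul A2 B)).
    { apply sub_le; auto. intros z Hz. exists z, one. split; [auto|split; [auto|rewrite mul1r; auto]]. }
    assert (L3 : card (setmul A1 B) + card (setmul A2 B) <= card (setmul A B)).
    { apply card_disj_sub; auto.
      - intros z [x [b [[Ax Kx] [Bb ->]]]]. exists x, b. repeat split; auto.
        rewrite mulKV in Ax; auto.
      - intros z [x [b [[Ax Kx] [Bb ->]]]]. exists x, b. auto.
      - intros z [x1 [b1 [[_ Kx1] [Bb1 E1]]]] [x2 [b2 [[Ax2 nK] [Bb2 E2]]]].
        apply nK.
        assert (E : x2 = x1 * (b1 * inv b2)).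
        { rewrite mulA, <- E1, E2, mulKr. auto. }
        rewrite E, mulA. apply Kmul; auto. }
    lia.
Qed.

Lemma setdiv_rtrans (B : set) b0 : setdiv (fun y => B (y * b0)) = setdiv B.
Proof.
  apply set_ext. intro z. split.
  - intros [b [c [Bb [Bc ->]]]]. exists (b * b0), (c * b0). repeat split; auto.
    rewrite inv_mul, mulA, mulKr. auto.
  - intros [b [c [Bb [Bc ->]]]]. exists (b * inv b0), (c * inv b0). repeat split.
    rewrite mulVK; auto. rewrite mulVK; auto.
    rewrite inv_mul, inv_inv, mulA, mulVK. auto.
Qed.

Lemma claim2 (A B : set) nA nB nAB : nonempty B ->
  card_is A nA -> card_is B nB -> card_is (setmul A B) nAB ->
  card_le (setmul A (gen (setdiv B))) nAB \/ 2 * nA + nB <= 2 * nAB.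
Proof.
  intros [b0 Bb0] cA cB cAB.
  rewrite <- (setdiv_rtrans B b0).
  apply claim2_one; auto.
  - rewrite mul1l; auto.
  - apply ci_fin in cB. destruct cB as [fB <-].
    destruct (card_rtrans G B b0 fB) as [f c]. rewrite <- c. apply fin_ci; auto.
  - apply ci_fin in cAB. destruct cAB as [fAB <-].
    assert (E : setmul A (fun y => B (y * b0)) = fun y => setmul A B (y * b0)).
    { apply set_ext. intro y. split.
      - intros [x [b [Ax [Bb ->]]]]. exists x, (b * b0). repeat split; auto. rewrite mulA; auto.
      - intros [x [b [Ax [Bb E]]]]. exists x, (b * inv b0). repeat split; auto.
        rewrite mulVK; auto. rewrite mulA, <- E, mulKr. auto. }
    rewrite E. destruct (card_rtrans G _ b0 fAB) as [f c]. rewrite <- c. apply fin_ci; auto.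
Qed.

Lemma setpow_fin (B : set) j : finite_set B -> finite_set (setpow B j).
Proof.
  intro fB. induction j; simpl.
  - apply (list_card G _ (one :: nil)). intros x ->; simpl; auto.
  - apply setmul_fin; auto.
Qed.

Lemma setpow_ne (B : set) j : nonempty B -> nonempty (setpow B j).
Proof.
  intros [b Bb]. induction j; simpl.
  - exists one; auto.
  - destruct IHj as [x Hx]. exists (x * b), x, b. auto.
Qed.

Lemma claim1 (B : set) : finite_set B -> nonempty B -> forall j nB nBj, 1 <= j ->
  card_is B nB -> card_is (setpow B j) nBj ->
  card_le (gen (setdiv B)) nBj \/ (j + 1) * nB <= 2 * nBj.
Proof.
  intros fB neB j. induction j as [|j IH]; intros nB nBj Hj cB cBj; [lia|].
  destruct (Nat.eq_dec j 0) as [->|Hj0].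
  - right. simpl in cBj. assert (E : setmul (fun z => z = one) B = B).
    { apply set_ext. intro y. split. intros [x [b [-> [Bb ->]]]]. rewrite mul1l; auto.
      intro By. exists one, y. repeat split; auto. rewrite mul1l; auto. }
    rewrite E in cBj. rewrite (card_is_uniq G B nB nBj cB cBj). lia.
  - pose proof (fin_ci _ (setpow_fin B j fB)) as cj.
    destruct (IH nB _ ltac:(lia) cB cj) as [IH1|IH2];
    destruct (claim2 (setpow B j) B _ nB nBj neB cj cB cBj) as [C1|C2].
    + left. destruct C1 as [m [Lm cm]]. apply ci_fin in cm. destruct cm as [fm <-].
      destruct (setpow_ne B j neB) as [x0 Hx0].
      destruct (card_ltrans G _ x0 fm) as [f2 c2].
      destruct (sub_card G (gen (setdiv B)) _ f2) as [f3 c3].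
      { intros z Kz. exists x0, z. auto. }
      exists (card (gen (setdiv B))). split. lia. apply fin_ci; auto.
    + left. destruct IH1 as [m [Lm cm]]. exists m. split; auto.
      apply ci_fin in cBj. destruct cBj as [fBj <-].
      pose proof neB as [b0 Bb0].
      destruct (card_rtrans G (setpow B (S j)) b0 fBj) as [_ c].
      assert (card (setpow B j) <= card (fun z => setpow B (S j) (z * b0))).
      { apply sub_le. apply card_rtrans; auto. intros z Hz. exists z, b0. auto. }
      lia.
    + left. destruct C1 as [m [Lm cm]]. apply ci_fin in cm. destruct cm as [fm <-].
      destruct (setpow_ne B j neB) as [x0 Hx0].
      destruct (card_ltrans G _ x0 fm) as [f2 c2].
      destruct (sub_card G (gen (setdiv B)) _ f2) as [f3 c3].
      { intros z Kz. exists x0, z. auto. }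
      exists (card (gen (setdiv B))). split. lia. apply fin_ci; auto.
    + right. lia.
Qed.

End Top.

Theorem mainTheorem10 (G : Group) (A B : G -> Prop) :
  finite_set A -> finite_set B -> nonempty A -> nonempty B ->
  (forall (j nB nBj : nat), 1 <= j ->
     card_is B nB -> card_is (setpow B j) nBj ->
     card_le (gen (setdiv B)) nBj \/ (j + 1) * nB <= 2 * nBj) /\
  (forall nA nB nAB : nat,
     card_is A nA -> card_is B nB -> card_is (setmul A B) nAB ->
     card_le (setmul A (gen (setdiv B))) nAB \/ 2 * nA + nB <= 2 * nAB).
Proof.
  intros fA fB neA neB. split.
  - apply claim1; auto.
  - intros. apply claim2; auto.
Qed.
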